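(* Assume (a) and (b). Then the minimizer of the optimization problem $$\min_{\beta\in\mathbb{R}}\;\lambda\int f^{*}\!\Big(-\frac{\beta+L_z(\theta)}{\lambda}\Big)\,dQ(\theta)+\beta$$ is $N_{Q,z}(\lambda)$.
   Context: Setting. - $\mathcal{M}\subseteq\mathbb{R}^d$; $h:\mathcal{M}\times\mathcal{X}\to\mathcal{Y}$; the loss $\ell:\mathcal{Y}\times\mathcal{Y}\to[0,\infty)$ satisfies $\ell(y,y)=0$. - For a dataset $z=((x_1,y_1),\dots,(x_n,y_n))$, $L_z(\theta)=\frac1n\sum_i\ell(h(\theta,x_i),y_i)$. - $Q$ is a Borel probability measure on $\mathcal{M}$, and $\lambda>0$. - $f:[0,\infty)\to\mathbb{R}$ is convex with $f(1)=0$ and $f(0)=\lim_{x\to0^+}f(x)$. - $\dot f$ is the derivative of $f$ on $(0,\infty)$ and $\dot f^{-1}$ its inverse function. Legendre–Fenchel transform. $f^*(t)=\sup_{x}(tx-f(x))$ (supremum over the domain of $f$), defined on $\mathcal{J}=\{t\in\mathbb{R}:f^*(t)<\infty\}$. Assumptions. - (a) $f$ is strictly convex and differentiable. - (b) There exists $\beta\in\mathbb{R}$ such that $\dot f^{-1}\big(-\frac{\beta+L_z(\theta)}{\lambda}\big)>0$ for all $\theta\in\operatorname{supp}Q$ and $\int\dot f^{-1}\big(-\frac{\beta+L_z(\theta)}{\lambda}\big)dQ(\theta)=1$. Normalization function. Let $\mathcal{A}_{Q,z}\subseteq(0,\infty)$ be the set of $\lambda$ for which (b) holds. The normalization function $N_{Q,z}:\mathcal{A}_{Q,z}\to\mathbb{R}$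 is defined by $$\int\dot f^{-1}\Big(-\frac{N_{Q,z}(\lambda)+L_z(\theta)}{\lambda}\Big)dQ(\theta)=1.$$ That is, $N_{Q,z}(\lambda)$ is the value $\beta$ of assumption (b). *)

(* Defs.v *)
From mathcomp Require Import all_boot all_order all_algebra.
From mathcomp Require Import all_classical all_reals all_analysis.
Set Implicit Arguments. Unset Strict Implicit. Unset Printing Implicit Defensive.
Import Order.TTheory GRing.Theory Num.Theory.
Import numFieldNormedType.Exports.
Local Open Scope classical_set_scope.
Local Open Scope ring_scope.

Definition Rvec (R : realType) (d : nat) : normedModType R := 'M[R]_(1, d).

Definition BorelRd (R : realType) (d : nat) := g_sigma_algebraType (@open (Rvec R d)).

Definition msupp (R : realType) (d : nat) (Q : set (BorelRd R d) -> \bar R)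
  : set (BorelRd R d) :=
  [set th | forall U : set (Rvec R d), open U -> U th -> (0 < Q U)%E].

Definition Lz (R : realType) (T X Y : Type) (ell : Y -> Y -> R)
  (h : T -> X -> Y) (z : seq (X * Y)) (th : T) : R :=
  (size z)%:R^-1 * \sum_(p <- z) ell (h th p.1) p.2.

(* Legendre-Fenchel transform of f : [0,oo) -> R, extended-real valued
   (f^*(t) = +oo exactly when t is outside the domain J). *)
Definition fstar (R : realType) (f : R -> R) (t : R) : \bar R :=
  ereal_sup [set (t * x - f x)%:E | x in `[0, +oo[%classic].

(* Inverse of the derivative of f on (0,oo): the x > 0 with f'(x) = t
   (unique under strict convexity); default value 0 outside the range of f'. *)
Definition fdot_inv (R : realType) (f : R -> R) (t : R) : R :=
  xget 0 [set x | 0 < x /\ derive1 f x = t].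

Definition convex_on (R : realType) (f : R -> R) (D : set R) : Prop :=
  forall x y t, D x -> D y -> 0 <= t <= 1 ->
    f (t * x + (1 - t) * y) <= t * f x + (1 - t) * f y.

Definition strictly_convex_on (R : realType) (f : R -> R) (D : set R) : Prop :=
  forall x y t, D x -> D y -> x != y -> 0 < t < 1 ->
    f (t * x + (1 - t) * y) < t * f x + (1 - t) * f y.

Definition assumption_b (R : realType) (d : nat) (Q : set (BorelRd R d) -> \bar R)
  (M : set (BorelRd R d)) (L : BorelRd R d -> R) (f : R -> R) (lam beta : R)
  : Prop :=
  (forall th, M th -> msupp Q th -> 0 < fdot_inv f (- ((beta + L th) / lam)))
  /\ (\int[Q]_(th in M) (fdot_inv f (- ((beta + L th) / lam)))%:E = 1)%E.

Definition normalization (R : realType) (d : nat) (Q : set (BorelRd R d) -> \bar R)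
  (M : set (BorelRd R d)) (L : BorelRd R d -> R) (f : R -> R) (lam : R) : R :=
  xget 0 [set beta | assumption_b Q M L f lam beta].

Definition objective (R : realType) (d : nat) (Q : set (BorelRd R d) -> \bar R)
  (M : set (BorelRd R d)) (L : BorelRd R d -> R) (f : R -> R) (lam beta : R)
  : \bar R :=
  (lam%:E * \int[Q]_(th in M) fstar f (- ((beta + L th) / lam)) + beta%:E)%E.

(* Main.v *)
Require Import Defs.
From mathcomp Require Import all_boot all_order all_algebra.
From mathcomp Require Import all_classical all_reals all_analysis.
From mathcomp Require Import measurable_realfun.
From mathcomp Require Import ring lra.
Import Order.TTheory GRing.Theory Num.Theory.
Import numFieldNormedType.Exports.
Local Open Scope classical_set_scope.
Local Open Scope ring_scope.

Section Real.
Variable R : realType.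
Implicit Types (f : R -> R) (x y : R).

Lemma deriv_eps f x : derivable f x 1 -> forall e, 0 < e ->
  exists2 r, 0 < r & forall h, h != 0 -> `|h| < r ->
    `|f (x + h) - f x - derive1 f x * h| <= e * `|h|.
Proof.
move=> fd e e0.
have := fd; move/cvgrPdist_le => /(_ e e0).
rewrite derive1E.
move=> /nbhs_ballP [r /= r0 Hr]; exists r => // h h0 hr.
have := Hr h; rewrite /ball /= sub0r normrN => /(_ hr h0) /=.
rewrite /derive /=.
set D := lim _.
move=> H.
have -> : f (x + h) - f x - D * h = - (h * (D - h^-1 *: (f (h *: 1 + x) - f x))).
  rewrite -[h *: 1]/(h * 1) mulr1 -[h^-1 *: _]/(h^-1 * _).
  by rewrite [h + x]addrC; field.
by rewrite normrN normrM mulrC ler_wpM2r.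
Qed.

Section Conv.
Variable f : R -> R.
Hypothesis conv : convex_on f `[0, +oo[%classic.
Hypothesis sconv : strictly_convex_on f `[0, +oo[%classic.
Hypothesis fder : forall x, 0 < x -> derivable f x 1.

Lemma tangent x y : 0 < x -> 0 <= y -> f x + derive1 f x * (y - x) <= f y.
Proof.
move=> x0 y0.
set v := y - x; set D := derive1 f x.
have [v0|v0] := eqVneq v 0.
  by rewrite v0 mulr0 addr0 /v; move/eqP: v0; rewrite subr_eq0 => /eqP ->.
have nv0 : 0 < `|v| by rewrite normr_gt0.
suff H : forall e, 0 < e -> f x + D * v - f y <= e * `|v|.
  rewrite leNgt; apply/negP => Ha.
  have a0 : 0 < f x + D * v - f y by lra.
  have := H ((f x + D * v - f y) / (2 * `|v|)).
  rewrite divr_gt0 ?mulr_gt0 // => /(_ isT).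
  have -> : (f x + D * v - f y) / (2 * `|v|) * `|v| = (f x + D * v - f y) / 2.
    by field; rewrite gt_eqF.
  lra.
move=> e e0.
have [r r0 Hr] := @deriv_eps f x (fder _ x0) e e0.
set t := r / (2 * (`|v| + r)).
have t0 : 0 < t by rewrite divr_gt0 // mulr_gt0 // ltr_wpDl.
have t1 : t < 1.
  rewrite ltr_pdivrMr ?mulr_gt0 ?ltr_wpDl // mul1r; lra.
have tv : `|t * v| < r.
  rewrite normrM gtr0_norm // /t mulrAC ltr_pdivrMr ?mulr_gt0 ?ltr_wpDl //; nra.
have hv : t * v != 0 by rewrite mulf_neq0 // gt_eqF.
have A := conv y x t.
have {A} A : f (t * y + (1 - t) * x) <= t * f y + (1 - t) * f x.
  apply: A.
  - by rewrite /= in_itv /= andbT.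
  - by rewrite /= in_itv /= andbT ltW.
  - by rewrite !ltW.
have := Hr (t * v) hv tv.
rewrite normrM (gtr0_norm t0) ler_norml => /andP[B _].
have E : t * y + (1 - t) * x = x + t * v by rewrite /v; ring.
rewrite E in A.
have C : t * (f x + D * v - f y - e * `|v|) <= 0.
  have -> : t * (f x + D * v - f y - e * `|v|) =
    (D * (t * v) - e * (t * `|v|)) - (t * f y + (1 - t) * f x - f x) by ring.
  rewrite -/D in B; lra.
rewrite pmulr_rle0 // in C; lra.
Qed.


Lemma deriv_right x c : 0 < x -> derive1 f x < c -> forall r, 0 < r ->
  exists2 h, 0 < h < r & f (x + h) - f x < c * h.
Proof.
move=> x0 Dc r r0; set D := derive1 f x.
have e0 : 0 < (c - D) / 2 by rewrite divr_gt0 // subr_gt0.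
have [r1 r10 Hr] := @deriv_eps f x (fder _ x0) _ e0.
have m0 : 0 < Num.min r r1 by rewrite lt_min r0 r10.
set h := Num.min r r1 / 2.
have h0 : 0 < h by rewrite divr_gt0.
have hr : h < Num.min r r1 by rewrite /h ltr_pdivrMr // ltr_pMr // ltr1n.
move: hr; rewrite lt_min => /andP[hr hr1].
exists h; first by rewrite h0 hr.
have := Hr h (lt0r_neq0 h0); rewrite gtr0_norm // => /(_ hr1).
rewrite ler_norml => /andP[_ B].
have E : c * h = D * h + 2 * ((c - D) / 2 * h) by field.
have P : 0 < (c - D) / 2 * h by rewrite mulr_gt0.
rewrite -/D in B; lra.
Qed.

Lemma deriv_left x c : 0 < x -> c < derive1 f x -> forall r, 0 < r ->
  exists2 h, 0 < h < r & f (x - h) - f x < - c * h.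
Proof.
move=> x0 Dc r r0; set D := derive1 f x.
have e0 : 0 < (D - c) / 2 by rewrite divr_gt0 // subr_gt0.
have [r1 r10 Hr] := @deriv_eps f x (fder _ x0) _ e0.
have m0 : 0 < Num.min r r1 by rewrite lt_min r0 r10.
set h := Num.min r r1 / 2.
have h0 : 0 < h by rewrite divr_gt0.
have hr : h < Num.min r r1 by rewrite /h ltr_pdivrMr // ltr_pMr // ltr1n.
move: hr; rewrite lt_min => /andP[hr hr1].
exists h; first by rewrite h0 hr.
have := Hr (- h); rewrite oppr_eq0 (gt_eqF h0) normrN gtr0_norm // => /(_ isT hr1).
rewrite ler_norml => /andP[_ B].
have E : - c * h = - D * h + 2 * ((D - c) / 2 * h) by field.
have P : 0 < (D - c) / 2 * h by rewrite mulr_gt0.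
rewrite -/D mulrN in B; lra.
Qed.

Lemma D_mono x y : 0 < x -> x < y -> derive1 f x < derive1 f y.
Proof.
move=> x0 xy; have y0 : 0 < y by apply: lt_trans xy.
have T1 := @tangent x y x0 (ltW y0).
have T2 := @tangent y x y0 (ltW x0).
have yx : 0 < y - x by rewrite subr_gt0.
have le : derive1 f x <= derive1 f y.
  rewrite -(ler_pM2r yx).
  have E : derive1 f y * (x - y) = - (derive1 f y * (y - x)) by ring.
  rewrite E in T2; lra.
rewrite lt_neqAle le andbT; apply/negP => /eqP Heq.
set k := derive1 f x; rewrite -/k in T1 Heq.
rewrite -Heq in T2.
have m0 : 0 <= (x + y) / 2 by rewrite divr_ge0 // addr_ge0 // ltW.
have T3 := @tangent x ((x + y) / 2) x0 m0.
have S : f (1/2 * x + (1 - 1/2) * y) < 1/2 * f x + (1 - 1/2) * f y.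
  apply: sconv.
  - by rewrite /= in_itv /= andbT ltW.
  - by rewrite /= in_itv /= andbT ltW.
  - by rewrite lt_eqF.
  - by rewrite divr_gt0 //= ltr_pdivrMr // mul1r ltr1n.
have E0 : 1/2 * x + (1 - 1/2) * y = (x + y) / 2 by field.
have E1 : k * ((x + y) / 2 - x) = (k * (y - x)) / 2 by field.
have E2 : k * (x - y) = - (k * (y - x)) by ring.
rewrite E0 in S; rewrite E1 in T3; rewrite E2 in T2.
lra.
Qed.


Lemma darboux x1 x2 t : 0 < x1 -> x1 <= x2 ->
  derive1 f x1 <= t <= derive1 f x2 -> exists2 x, 0 < x & derive1 f x = t.
Proof.
move=> x10 x12 /andP[t1 t2].
have [e1|n1] := eqVneq (derive1 f x1) t; first by exists x1.
have [e2|n2] := eqVneq (derive1 f x2) t.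
  by exists x2 => //; apply: lt_le_trans x12.
have lt1 : derive1 f x1 < t by rewrite lt_neqAle n1 t1.
have lt2 : t < derive1 f x2 by rewrite lt_neqAle eq_sym n2 t2.
set g := f - (fun y => y * t).
have gE : forall y, g y = f y - y * t by [].
have cg : {within `[x1, x2], continuous g}.
  apply: continuous_in_subspaceT => y; rewrite inE /= in_itv /= => /andP[y1 _].
  have y0 : 0 < y by apply: lt_le_trans y1.
  apply: cvgB.
    exact/differentiable_continuous/derivable1_diffP/fder.
  exact: cvgMr_tmp.
have [c cI cmin] := EVT_min x12 cg.
move: cI; rewrite in_itv /= => /andP[c1 c2].
have c0 : 0 < c by apply: lt_le_trans c1.
case: (ltgtP (derive1 f c) t) => [Dlt|Dgt|Deq]; last by exists c.
- have cx2 : c < x2.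
    rewrite lt_neqAle c2 andbT; apply/eqP => ce; rewrite ce in Dlt; lra.
  have [h /andP[h0 hr] H] := @deriv_right c t c0 Dlt (x2 - c) (ltac:(by rewrite subr_gt0)).
  have := cmin (c + h); rewrite in_itv /= !gE.
  have -> : (x1 <= c + h <= x2) = true by apply/andP; split; lra.
  move=> /(_ isT); rewrite mulrDl; lra.
- have cx1 : x1 < c.
    rewrite lt_neqAle c1 andbT; apply/eqP => ce; rewrite -ce in Dgt; lra.
  have [h /andP[h0 hr] H] := @deriv_left c t c0 Dgt (c - x1) (ltac:(by rewrite subr_gt0)).
  have := cmin (c - h); rewrite in_itv /= !gE.
  have -> : (x1 <= c - h <= x2) = true by apply/andP; split; lra.
  move=> /(_ isT); rewrite mulrBl; lra.
Qed.


Lemma fdot_inv_ge0 t : 0 <= fdot_inv f t.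
Proof.
rewrite /fdot_inv; case: xgetP => [y _ [y0 _]|_]; [exact: ltW|by rewrite lexx].
Qed.

Lemma fdot_inv_pos t : 0 < fdot_inv f t ->
  derive1 f (fdot_inv f t) = t.
Proof.
rewrite /fdot_inv; case: xgetP => [y _ [y0 ->]//|_]; by rewrite ltxx.
Qed.

Lemma fdot_inv_ex t x : 0 < x -> derive1 f x = t ->
  0 < fdot_inv f t /\ derive1 f (fdot_inv f t) = t.
Proof.
move=> x0 Dx; rewrite /fdot_inv.
by have [] := @xgetPex _ 0 [set x | 0 < x /\ derive1 f x = t] (ex_intro _ x (conj x0 Dx)).
Qed.

Lemma measurable_fdot_inv : measurable_fun setT (fdot_inv f).
Proof.
apply: (measurability (@measurable_realfun.RGenCInfty.G R)) => [|/= _ [_] [c] -> <-].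
  exact: measurable_realfun.RGenCInfty.measurableE.
apply: measurableI => //; apply: measurable_realfun.is_interval_measurable.
have [c0|c0] := leP c 0.
  move=> t1 t2 _ _ t _ /=; rewrite in_itv /= andbT.
  exact: le_trans c0 (fdot_inv_ge0 _).
move=> t1 t2 /=; rewrite !in_itv /= !andbT => H1 H2 t /andP[tt1 tt2].
have p1 : 0 < fdot_inv f t1 by apply: lt_le_trans H1.
have p2 : 0 < fdot_inv f t2 by apply: lt_le_trans H2.
have D1 := fdot_inv_pos _ p1; have D2 := fdot_inv_pos _ p2.
have x12 : fdot_inv f t1 <= fdot_inv f t2.
  rewrite leNgt; apply/negP => lt.
  have := D_mono _ _ p2 lt; rewrite D1 D2; lra.
have [x x0 Dx] := @darboux _ _ t p1 x12 (ltac:(by rewrite D1 D2 tt1 tt2)).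
have [p Dt] := fdot_inv_ex _ _ x0 Dx.
rewrite in_itv /= andbT (le_trans H1) // leNgt; apply/negP => lt.
have := D_mono _ _ p lt; rewrite Dt D1; lra.
Qed.

End Conv.
End Real.


Section Fstar.
Variable R : realType.
Variable f : R -> R.
Implicit Types (x y t : R).

Lemma fstar_ge t x : 0 <= x -> ((t * x - f x)%:E <= fstar f t)%E.
Proof.
move=> x0; apply: ereal_sup_ubound; exists x => //=.
by rewrite in_itv /= andbT.
Qed.

Lemma fstar_lsc : lower_semicontinuous (fstar f).
Proof.
move=> t a /ereal_sup_gt [_ [x /= x0 <-]]; rewrite lte_fin => ax.
exists [set s | a < s * x - f x].
  have c : (fun s => s * x - f x) @ t --> t * x - f x.
    by apply: cvgB; [exact: cvgMr_tmp | exact: cvg_cst].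
  exact: (cvgr_gt _ c).
have x0' : 0 <= x by move: x0; rewrite in_itv /= andbT.
move=> s /= as_; apply: (lt_le_trans _ (fstar_ge s x x0')); by rewrite lte_fin.
Qed.

Lemma measurable_fstar : measurable_fun setT (fstar f).
Proof. exact: (@measurable_realfun.lower_semicontinuous_measurable R (fstar f) fstar_lsc). Qed.

Lemma fstar_lb t : ((- f 0)%:E <= fstar f t)%E.
Proof. by have := fstar_ge t 0 (lexx 0); rewrite mulr0 sub0r. Qed.

Hypothesis conv : convex_on f `[0, +oo[%classic.
Hypothesis sconv : strictly_convex_on f `[0, +oo[%classic.
Hypothesis fder : forall x, 0 < x -> derivable f x 1.

Lemma fstar_eq t x : 0 < x -> derive1 f x = t -> fstar f t = (t * x - f x)%:E.
Proof.
move=> x0 Dx; apply/eqP; rewrite eq_le (fstar_ge t x (ltW x0)) andbT.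
apply: ge_ereal_sup => _ [y /= y0 <-]; rewrite lee_fin.
move: y0; rewrite in_itv /= andbT => y0.
have := @tangent _ _ conv fder _ _ x0 y0; rewrite Dx; lra.
Qed.

Lemma fstar_gt t x : 0 < x -> derive1 f x != t -> ((t * x - f x)%:E < fstar f t)%E.
Proof.
move=> x0 Dx.
case: (ltgtP (derive1 f x) t) Dx => // [lt|gt] _.
  have [h /andP[h0 _] H] := @deriv_right _ _ fder _ _ x0 lt _ ltr01.
  apply: lt_le_trans (fstar_ge t (x + h) (ltW (addr_gt0 x0 h0))); rewrite lte_fin.
  rewrite mulrDr; lra.
have [h /andP[h0 hx] H] := @deriv_left _ _ fder _ _ x0 gt _ x0.
have : 0 <= x - h by rewrite subr_ge0 ltW.
move=> /(fstar_ge t (x - h)); apply: lt_le_trans; rewrite lte_fin.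
rewrite mulrBr; lra.
Qed.

End Fstar.


Section Supp.
Variables (R : realType) (d : nat).

Lemma rat_approx (x : Rvec R d) (e : R) : 0 < e ->
  exists q : 'M[rat]_(1, d), ball x e (map_mx ratr q : Rvec R d).
Proof.
move=> e0.
have H : forall i j, x i j - e < x i j + e by move=> i j; lra.
exists (\matrix_(i, j) projT1 (cid (rat_in_itvoo (H i j)))).
split => // i j; rewrite !mxE.
case: cid => /= q; rewrite in_itv /= => /andP[q1 q2].
rewrite /ball /=; rewrite ltr_norml; apply/andP; split; lra.
Qed.


Lemma open_mBorel (U : set (Rvec R d)) : open U -> measurable (U : set (BorelRd R d)).
Proof. by move=> oU; apply: sub_sigma_algebra. Qed.

Lemma msupp_ae (Q : {measure set (BorelRd R d) -> \bar R}) :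
  Q.-negligible (~` msupp Q).
Proof.
pose B (p : 'M[rat]_(1, d) * nat) : set (BorelRd R d) :=
  ball (map_mx ratr p.1 : Rvec R d) (p.2.+1%:R^-1).
have mB p : measurable (B p) by apply: open_mBorel; exact: ball_open.
pose F (k : nat) : set (BorelRd R d) :=
  match unpickle k with
  | Some p => if pselect (Q (B p) = 0%E) then B p else set0
  | None => set0 end.
apply: (@negligibleS _ _ _ Q (\bigcup_k F k)).
  move=> th /= /existsNP [U /not_implyP [oU /not_implyP [Uth /negP]]].
  rewrite -leNgt => QU0.
  have {}QU0 : Q U = 0%E by apply/eqP; rewrite eq_le QU0 measure_ge0.
  have : nbhs th U by apply: open_nbhs_nbhs; split.
  move=> /nbhs_ballP [r /= r0 rU].
  have r20 : 0 < r / 2 by rewrite divr_gt0.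
  set n := Num.truncn (r / 2)^-1.
  have n1 : (n.+1%:R)^-1 < r / 2.
    rewrite -[X in _ < X]invrK ltf_pV2 ?posrE ?invr_gt0 ?ltr0n //.
    exact: truncnS_gt.
  have [q qth] := @rat_approx th (n.+1%:R^-1) ltac:(by rewrite invr_gt0 ltr0n).
  have sub : B (q, n) `<=` U.
    move=> y By; apply: rU.
    have := ball_triangle qth By.
    apply: le_ball => /=; move: n1; set m := (n.+1%:R^-1 : R); lra.
  have QB : Q (B (q, n)) = 0%E.
    apply/eqP; rewrite eq_le measure_ge0 andbT -QU0.
    by apply: le_measure => //; rewrite inE //; apply: open_mBorel.
  exists (pickle (q, n)) => //; rewrite /F pickleK.
  case: pselect => [QB'|nQ] /=; last by [].
  exact: ball_sym.
apply: negligible_bigcup => k; rewrite /F.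
case: (unpickle k) => [p|]; last by exists set0; split => //; rewrite measure0.
case: pselect => [Q0|nQ0] /=.
  by exists (B p); split.
by exists set0; split => //; rewrite measure0.
Qed.

End Supp.


Section Gen.
Local Open Scope ereal_scope.
Context d (T : measurableType d) (R : realType).
Variable mu : {finite_measure set T -> \bar R}.

Lemma int_null (D N : set T) (f : T -> \bar R) : measurable N -> measurable D ->
  measurable_fun D f -> mu N = 0 ->
  \int[mu]_(x in D) f x = \int[mu]_(x in D `\` N) f x.
Proof.
move=> mN mD mf N0; rewrite integralE [RHS]integralE.
congr (_ - _); apply: ge0_negligible_integral => //.
- exact: (measurable_funepos mf).
- exact: (measurable_funeneg mf).
Qed.

Lemma int_notint (D : set T) (g : T -> \bar R) (a : R) : measurable D ->
  measurable_fun D g -> (forall x, D x -> (- a)%:E <= g x) ->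
  ~ mu.-integrable D g -> \int[mu]_(x in D) g x = +oo.
Proof.
move=> mD mg ga nint.
have Hneg : \int[mu]_(x in D) g^\- x < +oo.
  apply: (@le_lt_trans _ _ (\int[mu]_(x in D) (cst `|a|%:E) x)).
    apply: ge0_le_integral => //.
    - exact: (measurable_funeneg mg).
    - move=> x Dx; rewrite funenegE /= ge_max lee_fin normr_ge0 andbT.
      rewrite leeNl; apply: le_trans (ga _ Dx).
      by rewrite -EFinN lee_fin lerN2 ler_norm.
  apply: integrable_lty => //.
  exact: (@finite_measure_integrable_cst _ _ _ mu D `|a| mD).
have Habs : \int[mu]_(x in D) `|g x| = +oo.
  apply/eqP; rewrite eq_le leey /= leNgt; apply/negP => lt.
  by apply: nint; apply/integrableP; split.
have : \int[mu]_(x in D) `|g x| = \int[mu]_(x in D) g^\+ x + \int[mu]_(x in D) g^\- x.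
  rewrite -ge0_integralD //; try exact: (measurable_funepos mg);
    try exact: (measurable_funeneg mg).
  by apply: eq_integral => x _; rewrite -[LHS]/((abse \o g) x) fune_abse.
move=> Hsum; rewrite Habs in Hsum; rewrite [LHS]integralE.
have : \int[mu]_(x in D) g^\- x \is a fin_num.
  by rewrite ge0_fin_numE // integral_ge0 // => x _; exact: funeneg_ge0.
move: Hsum; move: (\int[mu]_(x in D) g^\- x) (\int[mu]_(x in D) g^\+ x) => n p.
case: n => // n; case: p => [p|//|] H _.
  by rewrite -EFinD in H.
by rewrite addNye in H.
Qed.

End Gen.


Theorem theorem2 (R : realType) (d : nat) (M : set (BorelRd R d))
  (X Y : Type) (h : BorelRd R d -> X -> Y) (ell : Y -> Y -> R)
  (ell_ge0 : forall y y', 0 <= ell y y') (ell_refl : forall y, ell y y = 0)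
  (z : seq (X * Y)) (z_nonempty : (0 < size z)%N)
  (Q : probability (BorelRd R d) R)
  (mM : measurable M) (QM : Q M = 1%E)
  (mL : measurable_fun M (Lz ell h z))
  (lam : R) (lam_gt0 : 0 < lam)
  (f : R -> R)
  (f_convex : convex_on f `[0, +oo[%classic)
  (f1 : f 1 = 0)
  (f0 : (f @ (0:R)^'+) --> (f 0 : R))
  (f_strict : strictly_convex_on f `[0, +oo[%classic)
  (f_der : forall x, 0 < x -> derivable f x 1)
  (hb : exists beta, assumption_b Q M (Lz ell h z) f lam beta) :
  let N := normalization Q M (Lz ell h z) f lam in
  (forall beta, (objective Q M (Lz ell h z) f lam N
                 <= objective Q M (Lz ell h z) f lam beta)%E)
  /\ (forall beta, (objective Q M (Lz ell h z) f lam beta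
                    <= objective Q M (Lz ell h z) f lam N)%E -> beta = N).
Proof.
move=> N.
set L := Lz ell h z.
have L0 : forall th, 0 <= L th.
  move=> th; rewrite /L /Lz mulr_ge0 ?invr_ge0 //.
  by apply: sumr_ge0 => p _; exact: ell_ge0.
have hbN : assumption_b Q M L f lam N.
  rewrite /N /normalization; case: hb => b Hb.
  exact: (xgetPex 0 (ex_intro _ b Hb)).
case: hbN => Npos Nint.
have [N0 [mN0 QN0 subN0]] := @msupp_ae R d Q.
pose D := M `\` N0.
have mD : measurable D by apply: measurableD.
have DM : D `<=` M by move=> th [].
pose t (b : R) th := - ((b + L th) / lam).
pose x th := fdot_inv f (t N th).
have xpos : forall th, D th -> 0 < x th.
  move=> th [Mth nN0]; apply: Npos => //.
  apply: contra_notP nN0 => ns; exact: subN0.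
have Dx : forall th, D th -> derive1 f (x th) = t N th.
  by move=> th Dth; apply: fdot_inv_pos; exact: xpos.
have x0 : forall th, 0 <= x th by move=> th; exact: fdot_inv_ge0.
have mt : forall b, measurable_fun M (t b).
  move=> b; apply: measurable_funN; apply: measurable_funM => //.
  by apply: measurable_funD => //.
clearbody N L.
have mphi : forall b, measurable_fun M (fun th => fstar f (t b th)).
  move=> b; exact: (measurableT_comp (@measurable_fstar R f) (mt b)).
have mX : measurable_fun M (fun th => (x th)%:E).
  apply/measurable_EFinP.
  exact: (measurableT_comp (@measurable_fdot_inv R f f_convex f_strict f_der) (mt N)).
have intE : forall b, (\int[Q]_(th in M) fstar f (t b th) =
    \int[Q]_(th in D) fstar f (t b th))%E.
  by move=> b; apply: (@int_null _ _ _ Q _ _ _ mN0 mM (mphi b) QN0).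
have QD : Q D != 0%E.
  apply/negP => /eqP QD0.
  have : (Q M <= Q D + Q N0)%E.
    apply: le_trans (measureU2 _ mD mN0).
    apply: le_measure; rewrite ?inE //; first exact: measurableU.
    move=> th Mth; have [?|?] := pselect (N0 th); [by right|by left].
  by rewrite QM QD0 QN0 adde0 lee_fin ler10.
have intX : (\int[Q]_(th in D) (x th)%:E = 1)%E.
  by rewrite -(@int_null _ _ _ Q _ _ _ mN0 mM mX QN0).
have iX : Q.-integrable D (fun th => (x th)%:E).
  apply/integrableP; split; first exact: (measurable_funS mM DM mX).
  rewrite (eq_integral (fun th => (x th)%:E)); first by rewrite intX ltry.
  by move=> th _; rewrite gee0_abs // lee_fin.
have phiNE : forall th, D th ->
    fstar f (t N th) = (t N th * x th - f (x th))%:E.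
  by move=> th Dth; apply: (@fstar_eq R f f_convex f_der _ _ (xpos th Dth) (Dx th Dth)).
set D1 := derive1 f 1.
have tan1 : forall y, 0 <= y -> D1 * (y - 1) <= f y.
  move=> y y0; have := @tangent R f f_convex f_der 1 y ltr01 y0.
  by rewrite f1 add0r.
pose c1 := `|f 0| + `|D1|.
pose c2 := `|N| / lam + `|D1|.
have c10 : 0 <= c1 by rewrite addr_ge0.
have c20 : 0 <= c2 by rewrite addr_ge0 // divr_ge0 // ltW.
have iN : Q.-integrable D (fun th => fstar f (t N th)).
  apply: (@le_integrable _ _ _ Q D mD _ (fun th => (c1%:E + c2%:E * (x th)%:E)%E)).
  - exact: (measurable_funS mM DM (mphi N)).
  - move=> th Dth; rewrite phiNE // -EFinM -EFinD /= lee_fin.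
    have cx : 0 <= c1 + c2 * x th by rewrite addr_ge0 // mulr_ge0.
    rewrite (ger0_norm cx) ler_norml.
    have lb := @fstar_lb R f (t N th); rewrite phiNE // lee_fin in lb.
    have a1 : t N th * x th <= `|N| / lam * x th.
      apply: ler_wpM2r => //; rewrite /t -mulNr ler_pM2r ?invr_gt0 //.
      have h1 := ler_norm (- N); rewrite normrN in h1.
      by apply: le_trans h1; rewrite lerN2 lerDl.
    have a2 : - (D1 * x th) <= `|D1| * x th.
      by rewrite -mulNr ler_wpM2r // -normrN ler_norm.
    have a3 := tan1 _ (x0 th).
    have a4 : D1 <= `|D1| by exact: ler_norm.
    have a5 : - f 0 >= - `|f 0| by rewrite lerN2 ler_norm.
    have a6 : 0 <= c2 * x th by rewrite mulr_ge0.
    rewrite /c2 mulrDl in a6 *; rewrite /c1.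
    rewrite mulrBr mulr1 in a3.
    move: lb a1 a2 a3 a6 a4 a5; rewrite /c1.
    move: (t N th * x th) => TX; move: (f (x th)) => FX; move: (x th) => xv.
    move: (`|N| / lam) => nl.
    have n1 := normr_ge0 D1; have n2 := normr_ge0 (f 0).
    by move=> *; apply/andP; split; lra.
  - apply: integrableD => //.
      exact: (@finite_measure_integrable_cst _ _ _ Q D c1 mD).
    exact: integrableZl.
pose del b := (N - b) / lam.
pose G b th := (fstar f (t N th) + (del b)%:E * (x th)%:E)%E.
have iG : forall b, Q.-integrable D (G b).
  by move=> b; apply: integrableD => //; exact: integrableZl.
have intG : forall b, (\int[Q]_(th in D) G b th =
    \int[Q]_(th in D) fstar f (t N th) + (del b)%:E)%E.
  by move=> b; rewrite integralD // ?integralZl // ?intX ?mule1 //; exact: integrableZl.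
have GE : forall b th, D th -> G b th = (t b th * x th - f (x th))%:E.
  move=> b th Dth; rewrite /G phiNE // -EFinM -EFinD; congr EFin.
  by rewrite /t /del; field; rewrite gt_eqF.
have Gle : forall b th, D th -> (G b th <= fstar f (t b th))%E.
  by move=> b th Dth; rewrite GE //; exact: fstar_ge.
have Glt : forall b th, D th -> b != N -> (G b th < fstar f (t b th))%E.
  move=> b th Dth bN; rewrite GE //; apply: (@fstar_gt R f f_der _ _ (xpos th Dth)).
  rewrite Dx //; apply/eqP => H; move/eqP: bN; apply.
  have := congr1 (fun v => - v * lam) H; rewrite /t /= !opprK !divfK ?gt_eqF //.
  by move/addIr.
have finN : ((\int[Q]_(th in D) fstar f (t N th)) \is a fin_num)%E.
  by apply: (integrable_fin_num mD iN).
have objE : forall b, objective Q M L f lam b =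
    (lam%:E * \int[Q]_(th in D) fstar f (t b th) + b%:E)%E.
  by move=> b; rewrite /objective; congr (_ * _ + _)%E; exact: intE.
have lbphi : forall b th, D th -> ((- f 0)%:E <= fstar f (t b th))%E.
  by move=> b th _; exact: fstar_lb.
have notint : forall b, ~ Q.-integrable D (fun th => fstar f (t b th)) ->
    (\int[Q]_(th in D) fstar f (t b th) = +oo)%E.
  move=> b nib.
  apply: (@int_notint _ _ _ Q D _ (f 0) mD (measurable_funS mM DM (mphi b))) => //.
  by move=> th _; exact: fstar_lb.
have lamoo : (lam%:E * +oo = +oo)%E by rewrite muleC gt0_mulye // lte_fin.
have geI : forall b, Q.-integrable D (fun th => fstar f (t b th)) ->
    (\int[Q]_(th in D) fstar f (t N th) + (del b)%:E <=
     \int[Q]_(th in D) fstar f (t b th))%E.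
  move=> b ib; rewrite -intG; apply: le_integral => // th; rewrite inE => Dth.
  exact: Gle.
split.
  move=> b; rewrite !objE.
  have [ib|nib] := pselect (Q.-integrable D (fun th => fstar f (t b th))); last first.
    by rewrite (notint b) // lamoo addye ?leey.
  have le := geI b ib.
  have finb := integrable_fin_num mD ib.
  move: le finN finb.
  move: (\int[Q]_(th in D) fstar f (t N th))%E (\int[Q]_(th in D) fstar f (t b th))%E.
  move=> [vN| |] [vb| |] // le _ _.
  rewrite -!EFinM -!EFinD lee_fin; rewrite -EFinD lee_fin in le.
  have lm : lam * del b = N - b by rewrite /del; field; rewrite gt_eqF.
  have := ler_wpM2l (ltW lam_gt0) le; rewrite mulrDr lm; lra.
move=> b Hle; have [//|bN] := eqVneq b N; exfalso.
rewrite !objE in Hle.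
have [ib|nib] := pselect (Q.-integrable D (fun th => fstar f (t b th))); last first.
  move: Hle; rewrite (notint b) // lamoo addye // -(fineK finN) -EFinM -EFinD.
  by rewrite leye_eq.
have le := geI b ib.
have finb := integrable_fin_num mD ib.
have eqI : (\int[Q]_(th in D) fstar f (t b th) =
    \int[Q]_(th in D) fstar f (t N th) + (del b)%:E)%E.
  move: le Hle finN finb.
  move: (\int[Q]_(th in D) fstar f (t N th))%E (\int[Q]_(th in D) fstar f (t b th))%E.
  move=> [vN| |] [vb| |] // le Hle _ _.
  rewrite -EFinD lee_fin in le; rewrite -!EFinM -!EFinD lee_fin in Hle.
  rewrite -EFinD; congr EFin; apply/eqP; rewrite eq_le andbC le /=.
  have lm : lam * del b = N - b by rewrite /del; field; rewrite gt_eqF.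
  rewrite -(ler_pM2l lam_gt0) mulrDr lm; lra.
have ik := integrableB mD ib (iG b).
have intk : (\int[Q]_(th in D) (fstar f (t b th) - G b th) = 0)%E.
  rewrite (integralB mD ib (iG b)) eqI intG subee //.
  by rewrite fin_numD finN.
have mk := measurable_int Q ik.
have kpos : forall th, D th -> (0 < fstar f (t b th) - G b th)%E.
  by move=> th Dth; rewrite sube_gt0; exact: Glt.
have : (\int[Q]_(th in D) `|fstar f (t b th) - G b th| = 0)%E.
  rewrite -intk; apply: eq_integral => th; rewrite inE => Dth.
  by rewrite gee0_abs // ltW // kpos.
move/(ae_eq_integral_abs Q mD mk) => [N1 [mN1 QN1 sub1]].
have DN1 : D `<=` N1.
  move=> th Dth; apply: sub1 => /= /(_ Dth) k0.
  by have := kpos th Dth; rewrite k0 ltxx.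
have : (Q D <= Q N1)%E by apply: le_measure; rewrite ?inE.
rewrite QN1 => QD0; move/negP: QD; apply.
by rewrite eq_le QD0 measure_ge0.
Qed.
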